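(* Let $P$ be a 6-stack of rank $n$ and let $Q$ be a retract of $P$ that is a 4-tower, such that $\#(P(0)\cap Q(0))=1$, where $Q(0)$ is the set of minimal elements of $Q$. Then $n\ge 3$ and the poset $P(3,n)$ has a retract that is a 4-tower.
   Context: All posets are finite. For a poset $P$ and $p\in P$, the rank $r(p)$ of $p$ is the largest $m$ such that there is a chain $p_0<\dots<p_m=p$ in $P$. $P$ is ranked of rank $r(P)$ if every maximal chain has exactly $r(P)+1$ elements. For $0\le i\le j$, $P(i,j)=\{p\in P:i\le r(p)\le j\}$, $P(i)=P(i,i)$ (induced order). A subset $Q\subseteq P$ (induced order) is a retract of $P$ if there is an order-preserving $f:P\to Q$ with $f(q)=q$ for all $q\in Q$. The 6-crown $C_6$ is the poset on $\{x_0,x_1,x_2,y_0,y_1,y_2\}$ whose only strict comparabilities are $x_0<y_0>x_1<y_1>x_2<y_2>x_0$. A 6-stack is a ranked poset $P$ of rank $n\ge1$ such that $P(i,i+1)\cong C_6$ for each $0\le i<n$. The ordinal sum of posets $P_1,\dots,P_k$ ($k\ge1$) is their disjoint union ordered by the orders of the $P_i$ together with $p<q$ whenever $p\in P_i,q\in P_j,i<j$. A 4-tower is an ordinal sum of one or more two-element antichains. *)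

(* Defs.v *)
From mathcomp Require Import all_boot all_order.
Set Implicit Arguments. Unset Strict Implicit. Unset Printing Implicit Defensive.
Import Order.Theory.

(* A finite poset P is a finPOrderType T (its carrier is all of T);
   subposets are subsets {set T} with the induced order. *)
Section PosetDefs.
Local Open Scope order_scope.
Context {d : Order.disp_t} {T : finPOrderType d}.

Definition is_chain (C : {set T}) : bool :=
  [forall x in C, forall y in C, (x <= y) || (y <= x)].

Definition maximal_chain (C : {set T}) : bool :=
  is_chain C && [forall D : {set T}, (is_chain D && (C \subset D)) ==> (D == C)].

Definition ranked_of_rank (n : nat) : Prop :=
  forall C : {set T}, maximal_chain C -> #|C| = n.+1.

Definition has_chain_below (p : T) (m : nat) : bool :=
  [exists t : (m.+1).-tuple T, sorted (fun x y : T => x < y) t && (last p t == p)].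

(* r(p): the largest m such that there is a chain p_0 < ... < p_m = p
   (any such m satisfies m < #|T|) *)
Definition rank (p : T) : nat :=
  \max_(m < #|T| | has_chain_below p m) m.

Definition rank_set (i j : nat) : {set T} :=
  [set p : T | (i <= rank p)%N && (rank p <= j)%N].

Definition minimal_in (Q : {set T}) : {set T} :=
  [set q in Q | [forall q' in Q, ~~ (q' < q)]].

Definition retract_of (S Q : {set T}) : Prop :=
  Q \subset S /\
  exists f : T -> T,
    (forall x, x \in S -> f x \in Q) /\
    (forall x y, x \in S -> y \in S -> x <= y -> f x <= f y) /\
    (forall q, q \in Q -> f q = q).

(* Q (with induced order) is a 4-tower: isomorphic to an ordinal sum of
   k >= 1 two-element antichains (level lvl q in 0..k-1) *)
Definition four_tower (Q : {set T}) : Prop :=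
  exists (k : nat) (lvl : T -> nat),
    (0 < k)%N /\
    (forall q, q \in Q -> (lvl q < k)%N) /\
    (forall i, (i < k)%N -> #|[set q in Q | lvl q == i]| = 2) /\
    (forall x y, x \in Q -> y \in Q -> x != y -> (x <= y) = (lvl x < lvl y)%N).
End PosetDefs.

(* The 6-crown on 'I_6: indices 0,1,2 are x_0,x_1,x_2 and 3,4,5 are
   y_0,y_1,y_2; x_j < y_i iff j = i or j = i+1 (mod 3). *)
Definition c6le (a b : 'I_6) : bool :=
  (a == b) || [&& (a < 3)%N, (3 <= b)%N &
                  ((nat_of_ord a == b - 3) || (nat_of_ord a == (b - 3).+1 %% 3))]%N.

Section Stack.
Local Open Scope order_scope.
Context {d : Order.disp_t} {T : finPOrderType d}.

Definition iso_C6 (S : {set T}) : Prop :=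
  exists f : 'I_6 -> T,
    injective f /\ [set f a | a : 'I_6] = S /\
    (forall a b, (f a <= f b) = c6le a b).

Definition six_stack (n : nat) : Prop :=
  (1 <= n)%N /\ @ranked_of_rank d T n /\
  (forall i, (i < n)%N -> iso_C6 (@rank_set d T i i.+1)).
End Stack.

(* Main.v *)
Require Import Defs.
From mathcomp Require Import all_boot all_order zify.
Set Implicit Arguments. Unset Strict Implicit. Unset Printing Implicit Defensive.
Import Order.Theory.

Definition o6 : seq 'I_6 := [:: @Ordinal 6 0 isT; @Ordinal 6 1 isT; @Ordinal 6 2 isT;
  @Ordinal 6 3 isT; @Ordinal 6 4 isT; @Ordinal 6 5 isT].
Lemma mem_o6 (a : 'I_6) : a \in o6.
Proof. by case: a => [[|[|[|[|[|[|//]]]]]] H]. Qed.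
Definition ltc (a b : 'I_6) := (b != a) && c6le a b.

Lemma F_rank (a : 'I_6) : exists b : 'I_6, if (a < 3)%N then ltc a b else ltc b a.
Proof.
have H : all (fun a : 'I_6 => has (fun b : 'I_6 => if (a < 3)%N then ltc a b else ltc b a) o6) o6 by [].
by move/allP: H => /(_ a (mem_o6 _)) /hasP [b _ Hb]; exists b.
Qed.

Lemma F_A' (a y b : 'I_6) : (a < 3)%N -> (y < 3)%N -> (3 <= b)%N -> y != a -> ~~ ltc a b -> ltc y b.
Proof.
have H : all (fun a : 'I_6 => all (fun y : 'I_6 => all (fun b : 'I_6 =>
  (a < 3)%N ==> (y < 3)%N ==> (3 <= b)%N ==> (y != a) ==> ~~ ltc a b ==> ltc y b) o6) o6) o6 by [].
move/allP: H => /(_ a (mem_o6 _))/allP/(_ y (mem_o6 _))/allP/(_ b (mem_o6 _)) H h1 h2 h3 h4 h5.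
by move: H; rewrite h1 h2 h3 h4 h5.
Qed.

Lemma F_A (a b u : 'I_6) : (a < 3)%N -> (3 <= b)%N -> (3 <= u)%N -> u != b -> ~~ ltc a b -> ltc a u.
Proof.
have H : all (fun a : 'I_6 => all (fun b : 'I_6 => all (fun u : 'I_6 =>
  (a < 3)%N ==> (3 <= b)%N ==> (3 <= u)%N ==> (u != b) ==> ~~ ltc a b ==> ltc a u) o6) o6) o6 by [].
move/allP: H => /(_ a (mem_o6 _))/allP/(_ b (mem_o6 _))/allP/(_ u (mem_o6 _)) H h1 h2 h3 h4 h5.
by move: H; rewrite h1 h2 h3 h4 h5.
Qed.

Lemma F_B (u a : 'I_6) : (3 <= u)%N -> (a < 3)%N -> exists y : 'I_6, [/\ (y < 3)%N, y != a & ltc y u].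
Proof.
have H : all (fun u : 'I_6 => all (fun a : 'I_6 =>
  (3 <= u)%N ==> (a < 3)%N ==> has (fun y : 'I_6 => [&& (y < 3)%N, y != a & ltc y u]) o6) o6) o6 by [].
move/allP: H => /(_ u (mem_o6 _))/allP/(_ a (mem_o6 _)) H h1 h2.
by move: H; rewrite h1 h2 => /hasP [y _ /and3P[]]; exists y.
Qed.

Lemma F_H (b : 'I_6) : exists u : 'I_6, (3 <= u)%N /\ u != b.
Proof.
have H : all (fun b : 'I_6 => has (fun u : 'I_6 => (3 <= u)%N && (u != b)) o6) o6 by [].
by move/allP: H => /(_ b (mem_o6 _)) /hasP [u _ /andP[]]; exists u.
Qed.

Lemma F_F (u1 u2 : 'I_6) : (u1 < 3)%N -> (u2 < 3)%N -> u1 != u2 ->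
  exists w : 'I_6, [/\ (3 <= w)%N, ltc u1 w & ltc u2 w].
Proof.
have H : all (fun u1 : 'I_6 => all (fun u2 : 'I_6 =>
  (u1 < 3)%N ==> (u2 < 3)%N ==> (u1 != u2) ==> has (fun w : 'I_6 => [&& (3 <= w)%N, ltc u1 w & ltc u2 w]) o6) o6) o6 by [].
move/allP: H => /(_ u1 (mem_o6 _))/allP/(_ u2 (mem_o6 _)) H h1 h2 h3.
by move: H; rewrite h1 h2 h3 => /hasP [w _ /and3P[]]; exists w.
Qed.

Lemma F_G1 (x : 'I_6) : (3 <= x)%N ->
  exists l1 l2 : 'I_6, [/\ (l1 < 3)%N, (l2 < 3)%N, l1 != l2, ltc l1 x & ltc l2 x].
Proof.
have H : all (fun x : 'I_6 => (3 <= x)%N ==> has (fun l1 : 'I_6 => has (fun l2 : 'I_6 =>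
  [&& (l1 < 3)%N, (l2 < 3)%N, l1 != l2, ltc l1 x & ltc l2 x]) o6) o6) o6 by [].
move/allP: H => /(_ x (mem_o6 _)) H h1.
by move: H; rewrite h1 => /hasP [l1 _ /hasP [l2 _ /and5P[]]]; exists l1, l2.
Qed.

Lemma F_G2 (m1 m2 k : 'I_6) : (3 <= m1)%N -> (3 <= m2)%N -> (k < 3)%N -> m1 != m2 -> ltc k m1 || ltc k m2.
Proof.
have H : all (fun m1 : 'I_6 => all (fun m2 : 'I_6 => all (fun k : 'I_6 =>
  (3 <= m1)%N ==> (3 <= m2)%N ==> (k < 3)%N ==> (m1 != m2) ==> ltc k m1 || ltc k m2) o6) o6) o6 by [].
move/allP: H => /(_ m1 (mem_o6 _))/allP/(_ m2 (mem_o6 _))/allP/(_ k (mem_o6 _)) H h1 h2 h3 h4.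
by move: H; rewrite h1 h2 h3 h4.
Qed.

Section Ranks.
Local Open Scope order_scope.
Context {d : Order.disp_t} {T : finPOrderType d}.

Lemma chainP (p : T) m : reflect (exists s : seq T,
  [/\ size s = m.+1, sorted (fun x y : T => x < y) s & last p s = p]) (has_chain_below p m).
Proof.
apply: (iffP existsP) => [[t /andP[Hs /eqP Hl]] | [s [Hz Hs Hl]]].
  by exists (val t); rewrite size_tuple.
by exists (@Tuple m.+1 T s (introT eqP Hz)); rewrite /= Hs Hl eqxx.
Qed.

Lemma chain_size (s : seq T) : sorted (fun x y : T => x < y) s -> (size s <= #|T|)%N.
Proof.
move=> Hs; have Hu : uniq s.
  by apply: (sorted_uniq _ _ Hs) => [x y z|x]; [exact: lt_trans | exact: ltxx].
by rewrite -(card_uniqP Hu) max_card.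
Qed.

Lemma rank_ge (p : T) m : has_chain_below p m -> (m <= rank p)%N.
Proof.
move=> H; have /chainP [s [Hz Hs _]] := H.
have Hm : (m < #|T|)%N by have := chain_size Hs; rewrite Hz.
exact: (@leq_bigmax_cond _ (fun i : 'I_#|T| => has_chain_below p i) (fun i => nat_of_ord i) (Ordinal Hm) H).
Qed.

Lemma rank_wit (p : T) : has_chain_below p (rank p).
Proof.
have HT : (0 < #|T|)%N by apply/card_gt0P; exists p.
have H0 : has_chain_below p 0 by apply/chainP; exists [:: p].
have HA : (0 < #|[pred i : 'I_#|T| | has_chain_below p i]|)%N.
  by apply/card_gt0P; exists (Ordinal HT).
have [i Hi Heq] := eq_bigmax_cond (fun i : 'I_#|T| => nat_of_ord i) HA.
have E : rank p = i := Heq.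
by rewrite E.
Qed.

Lemma rank_lt (x y : T) : x < y -> (rank x < rank y)%N.
Proof.
move=> Hxy; apply: rank_ge.
have /chainP [s [Hz Hs Hl]] := rank_wit x.
apply/chainP; exists (rcons s y); split; first by rewrite size_rcons Hz.
  case: s Hz Hs Hl => [//|x0 s] _ /= Hs Hl.
  by rewrite rcons_path Hs /=; move: Hl => /= ->.
by rewrite last_rcons.
Qed.

Lemma rank_pred (x : T) r : rank x = r.+1 -> exists2 y, y < x & rank y = r.
Proof.
move=> Hr; have /chainP [s [Hz Hs Hl]] := rank_wit x.
rewrite Hr in Hz.
case/lastP: s Hz Hs Hl => [//|s z].
rewrite size_rcons last_rcons => /eqP; rewrite eqSS => /eqP Hz Hs Hl; subst z.
case: s Hz Hs => [//|y0 s] Hz Hs.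
move: Hs; rewrite /= rcons_path => /andP[Hs Hy].
exists (last y0 s) => //.
apply/eqP; rewrite eqn_leq; apply/andP; split.
  by rewrite -ltnS -Hr rank_lt.
by apply: rank_ge; apply/chainP; exists (y0 :: s); split.
Qed.

Lemma rank_le_n n : @ranked_of_rank d T n -> forall x : T, (rank x <= n)%N.
Proof.
move=> Hr x; have /chainP [s [Hz Hs _]] := rank_wit x.
set C0 := [set z in s].
have Hu : uniq s.
  by apply: (sorted_uniq _ _ Hs) => [a b c|a]; [exact: lt_trans | exact: ltxx].
have HC0 : is_chain C0.
  apply/forallP => a; apply/implyP => Ha; apply/forallP => b; apply/implyP => Hb.
  rewrite !inE in Ha Hb.
  have Ht : transitive (fun x y : T => x < y) by move=> ? ? ?; exact: lt_trans.
  case: (ltngtP (index a s) (index b s)) => Hab.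
  - by rewrite (ltW (sorted_ltn_index Ht Hs a b Ha Hb Hab)).
  - by rewrite (ltW (sorted_ltn_index Ht Hs b a Hb Ha Hab)) orbT.
  - by rewrite -(nth_index a Ha) Hab (nth_index a Hb) lexx.
have HP : is_chain C0 && (C0 \subset C0) by rewrite HC0 subxx.
case: (@arg_maxnP _ C0 (fun D => is_chain D && (C0 \subset D)) (fun D => #|D|) HP)
  => D /andP[HD HCD] Dmax.
have HDm : maximal_chain D.
  rewrite /maximal_chain HD /=; apply/forallP => D'; apply/implyP => /andP[HD' HDD'].
  have HC'D : C0 \subset D' := subset_trans HCD HDD'.
  have Hc : (#|D'| <= #|D|)%N := Dmax D' (introT andP (conj HD' HC'D)).
  by rewrite eq_sym eqEcard HDD' Hc.
have H2 := Hr D HDm.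
have H1 := subset_leq_card HCD.
move: H1; rewrite cardsE (card_uniqP Hu) Hz H2.
done.
Qed.

End Ranks.

Section Stack2.
Local Open Scope order_scope.
Context {d : Order.disp_t} {T : finPOrderType d}.

Lemma crown n i : @six_stack d T n -> (i < n)%N -> exists h : 'I_6 -> T,
  [/\ injective h,
      (forall z, rank z = i -> exists2 a, z = h a & (a < 3)%N),
      (forall z, rank z = i.+1 -> exists2 a, z = h a & (3 <= a)%N),
      (forall a b, (h a < h b) = ltc a b) &
      (forall a, rank (h a) = if (a < 3)%N then i else i.+1)].
Proof.
rewrite /six_stack => -[_ [_ Hc]] Hi; have [h [hinj [himg hle]]] := Hc i Hi.
have hlt : forall a b, (h a < h b) = ltc a b.
  by move=> a b; rewrite lt_def hle (inj_eq hinj).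
have hin : forall a, (i <= rank (h a) <= i.+1)%N.
  move=> a; have : h a \in rank_set i i.+1 by rewrite -himg imset_f.
  by rewrite inE.
have hr : forall a, rank (h a) = if (a < 3)%N then i else i.+1.
  move=> a; have [b Hb] := F_rank a.
  have Ha := hin a; have Hb' := hin b.
  case: ifP Hb => Ha3 Hb; rewrite -hlt in Hb; have := rank_lt Hb; lia.
have himg' : forall z, (i <= rank z <= i.+1)%N -> exists a, z = h a.
  move=> z Hz; have : z \in rank_set i i.+1 by rewrite inE.
  by rewrite -himg => /imsetP [a _ ->]; exists a.
exists h; split => //.
- move=> z Hz; have [|a Ea] := himg' z; first by rewrite Hz leqnn leqnSn.
  exists a => //; move: (hr a); rewrite -Ea Hz; case: ifP => //; lia.
- move=> z Hz; have [|a Ea] := himg' z; first by rewrite Hz leqnn leqnSn.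
  exists a => //; move: (hr a); rewrite -Ea Hz; case: ifP => //; lia.
Qed.

Lemma c_A' n i (a y b : T) : @six_stack d T n -> (i < n)%N -> rank a = i -> rank y = i ->
  rank b = i.+1 -> y != a -> ~~ (a < b) -> y < b.
Proof.
move=> Hst Hi Ha Hy Hb Hya Hab; have [h [hinj hlo hup hlt hr]] := crown Hst Hi.
case: (hlo a Ha) => a' Ea Ha'; case: (hlo y Hy) => y' Ey Hy'; case: (hup b Hb) => b' Eb Hb'.
rewrite Ea Ey Eb in Hya Hab *.
rewrite hlt; rewrite hlt in Hab; rewrite (inj_eq hinj) in Hya; exact: (F_A' Ha' Hy' Hb' Hya Hab).
Qed.

Lemma c_A n i (a b u : T) : @six_stack d T n -> (i < n)%N -> rank a = i -> rank b = i.+1 ->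
  rank u = i.+1 -> u != b -> ~~ (a < b) -> a < u.
Proof.
move=> Hst Hi Ha Hb Hu Hub Hab; have [h [hinj hlo hup hlt hr]] := crown Hst Hi.
case: (hlo a Ha) => a' Ea Ha'; case: (hup b Hb) => b' Eb Hb'; case: (hup u Hu) => u' Eu Hu'.
rewrite Ea Eb Eu in Hub Hab *.
rewrite hlt; rewrite hlt in Hab; rewrite (inj_eq hinj) in Hub; exact: (F_A Ha' Hb' Hu' Hub Hab).
Qed.

Lemma c_B n i (u a : T) : @six_stack d T n -> (i < n)%N -> rank u = i.+1 -> rank a = i ->
  exists y, [/\ rank y = i, y != a & y < u].
Proof.
move=> Hst Hi Hu Ha; have [h [hinj hlo hup hlt hr]] := crown Hst Hi.
case: (hlo a Ha) => a' Ea Ha'; case: (hup u Hu) => u' Eu Hu'; rewrite Ea Eu.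
have [y [Hy1 Hy2 Hy3]] := F_B Hu' Ha'.
exists (h y); split; last by rewrite hlt.
  by rewrite hr Hy1.
by rewrite (inj_eq hinj).
Qed.

Lemma c_H n i (b : T) : @six_stack d T n -> (i < n)%N -> rank b = i.+1 ->
  exists u, rank u = i.+1 /\ u != b.
Proof.
move=> Hst Hi Hb; have [h [hinj hlo hup hlt hr]] := crown Hst Hi.
case: (hup b Hb) => b' Eb Hb'; rewrite Eb.
have [u [Hu1 Hu2]] := F_H b'.
exists (h u); split; first by rewrite hr ltnNge Hu1.
by rewrite (inj_eq hinj).
Qed.

Lemma c_F n i (u1 u2 : T) : @six_stack d T n -> (i < n)%N -> rank u1 = i -> rank u2 = i ->
  u1 != u2 -> exists w, [/\ rank w = i.+1, u1 < w & u2 < w].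
Proof.
move=> Hst Hi H1 H2 H12; have [h [hinj hlo hup hlt hr]] := crown Hst Hi.
case: (hlo u1 H1) => a1 E1 Ha1; case: (hlo u2 H2) => a2 E2 Ha2.
rewrite E1 E2 (inj_eq hinj) in H12 *.
have [w [Hw1 Hw2 Hw3]] := F_F Ha1 Ha2 H12.
by exists (h w); rewrite !hlt hr ltnNge Hw1.
Qed.

Lemma c_G n j (x u : T) : @six_stack d T n -> (j.+1 < n)%N -> rank x = j.+2 -> rank u = j ->
  u < x.
Proof.
move=> Hst Hj Hx Hu.
have [h2 [hinj2 hlo2 hup2 hlt2 hr2]] := crown Hst Hj.
have [h1 [hinj1 hlo1 hup1 hlt1 hr1]] := crown Hst (ltnW Hj).
case: (hup2 x Hx) => x' Ex Hx'.
have [l1 [l2 [Hl1 Hl2 Hl12 Hlx1 Hlx2]]] := F_G1 Hx'.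
have R1 : rank (h2 l1) = j.+1 by rewrite hr2 Hl1.
have R2 : rank (h2 l2) = j.+1 by rewrite hr2 Hl2.
case: (hup1 _ R1) => m1 E1 Hm1; case: (hup1 _ R2) => m2 E2 Hm2.
case: (hlo1 u Hu) => k Ek Hk.
have Hm12 : m1 != m2.
  by apply: contraNneq Hl12 => Em; apply/eqP/hinj2; rewrite E1 E2 Em.
have := F_G2 Hm1 Hm2 Hk Hm12; rewrite -!hlt1 -E1 -E2 -Ek => /orP[H|H].
  by apply: lt_trans H _; rewrite Ex hlt2.
by apply: lt_trans H _; rewrite Ex hlt2.
Qed.

Lemma below_all n (Hst : @six_stack d T n) :
  forall m (x : T) j (u : T), rank x = m -> (j.+2 <= m)%N -> rank u = j -> u < x.
Proof.
have Hle := rank_le_n Hst.2.1.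
elim=> [|m IH] x j u Hx Hjm Hu; first by [].
have [y Hyx Hy] := rank_pred Hx.
case: (ltnP j.+2 m.+1) => Hjm'.
  by apply: lt_trans (IH y j u Hy _ Hu) Hyx.
have Ex : rank x = j.+2 by lia.
apply: (c_G Hst _ Ex Hu); have := Hle x; lia.
Qed.

End Stack2.

Theorem lemma5p7 (d : Order.disp_t) (T : finPOrderType d) (n : nat) (Q : {set T}) :
  @six_stack d T n ->
  retract_of [set: T] Q ->
  four_tower Q ->
  #|@rank_set d T 0 0 :&: minimal_in Q| = 1 ->
  (3 <= n)%N /\ exists R : {set T}, retract_of (@rank_set d T 3 n) R /\ four_tower R.
Proof.
move=> Hst [_ [f [fQ [fmon fid]]]] [k [lvl [k0 [lvlk [lvlcard lvlle]]]]] Hmin.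
have fQ' : forall x, f x \in Q := fun x => fQ x (in_setT x).
have fm : forall x y, (x <= y)%O -> (f x <= f y)%O := fun x y => fmon x y (in_setT x) (in_setT y).
have rle := rank_le_n Hst.2.1.
have Hlt : forall x y, x \in Q -> y \in Q -> (lvl x < lvl y)%N -> (x < y)%O.
  move=> x y Hx Hy Hl.
  have Hne : x != y by apply: contraTneq Hl => ->; rewrite ltnn.
  by rewrite lt_def eq_sym Hne lvlle.
have Habove : forall q x y, q \in Q -> x \in Q -> y \in Q -> x != y -> lvl x = lvl y ->
    (x <= q)%O -> (y <= q)%O -> (lvl x < lvl q)%N.
  move=> q x y Hq Hx Hy Hxy Hl Hxq Hyq.
  have [Eq|Nq] := eqVneq q x.
    subst q; move: Hyq; rewrite (lvlle y x Hy Hx); first by rewrite Hl ltnn.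
    by rewrite eq_sym.
  by rewrite -(lvlle x q Hx Hq) // eq_sym.
have Hbelow : forall q c, q \in Q -> c \in Q -> (q <= c)%O -> (lvl c <= lvl q)%N -> q = c.
  move=> q c Hq Hc Hqc Hl; apply/eqP; apply: contraTT Hl => Hne.
  by rewrite -ltnNge -(lvlle q c Hq Hc Hne).
have Hother : forall i x, (i < k)%N -> x \in Q -> lvl x = i ->
    exists y, [/\ y \in Q, y != x & lvl y = i].
  move=> i x Hi Hx Hl.
  have Hx' : x \in [set q in Q | lvl q == i] by rewrite inE Hx Hl eqxx.
  have := lvlcard i Hi; rewrite (cardsD1 x) Hx' => /eqP; rewrite eqSS => /eqP H1.
  have : (0 < #|[set q in Q | lvl q == i] :\ x|)%N by rewrite H1.
  case/card_gt0P => y; rewrite !inE => /and3P[Hyx Hy /eqP Hly].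
  by exists y.
have Hexist : forall i, (i < k)%N -> exists y, y \in Q /\ lvl y = i.
  move=> i Hi; have : (0 < #|[set q in Q | lvl q == i]|)%N by rewrite lvlcard.
  by case/card_gt0P => y; rewrite inE => /andP[Hy /eqP Hly]; exists y.
have Hmin0 : forall q, q \in Q -> (q \in minimal_in Q) = (lvl q == 0%N).
  move=> q Hq; rewrite inE Hq /=; apply/idP/idP.
    move=> /forallP Hm; apply: contraT; rewrite -lt0n => Hl.
    have [y [Hy Hly]] := Hexist 0%N k0.
    by move: (Hm y); rewrite Hy /= Hlt // Hly.
  move=> /eqP Hl; apply/forallP => q'; apply/implyP => Hq'; apply/negP => Hlt'.
  move: Hlt'; rewrite lt_def => /andP[Hne Hle]; move: Hle.
  by rewrite (lvlle q' q Hq' Hq) ?Hl // eq_sym.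
have [a Ea] : exists a, rank_set 0 0 :&: minimal_in Q = [set a] by apply/cards1P; rewrite Hmin.
have Ha : a \in rank_set 0 0 :&: minimal_in Q by rewrite Ea set11.
move: (Ha); rewrite inE => /andP[]; rewrite inE => /andP[_ Hra].
have Hra0 : rank a = 0%N by lia.
move=> HaM; have HaQ : a \in Q by move: HaM; rewrite inE => /andP[].
have Hla : lvl a = 0%N by apply/eqP; rewrite -Hmin0.
have [b [HbQ Hba Hlb]] := Hother 0%N a k0 HaQ Hla.
have Hab0 : a != b by rewrite eq_sym.
have Hlab : lvl a = lvl b by rewrite Hla Hlb.
have Hab : ~~ (a <= b)%O by rewrite (lvlle a b HaQ HbQ) ?Hla ?Hlb // eq_sym.
have Hab' : ~~ (a < b)%O by apply: contra Hab; exact: ltW.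
have Hrb : rank b = 1%N.
  have Hb0 : rank b != 0%N.
    apply/eqP => Hb0; have : b \in rank_set 0 0 :&: minimal_in Q.
      rewrite inE (Hmin0 b HbQ) Hlb eqxx andbT inE Hb0; done.
    by rewrite Ea inE (negbTE Hba).
  case: (ltnP (rank b) 2) => Hb2; first by lia.
  by move: Hab'; rewrite (below_all Hst (erefl _) Hb2 Hra0).
have n0 : (0 < n)%N by have := rle b; lia.
have Hy0 : forall y, rank y = 0%N -> y != a -> f y = b.
  move=> y Hy Hya; have Hyb := c_A' Hst n0 Hra0 Hy Hrb Hya Hab'.
  apply: Hbelow => //; first by rewrite -(fid b HbQ); exact: fm (ltW Hyb).
  by rewrite Hlb.
have Hu1 : forall u, rank u = 1%N -> u != b -> (0 < lvl (f u))%N.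
  move=> u Hu Hub; have Hau := c_A Hst n0 Hra0 Hrb Hu Hub Hab'.
  have [y [Hy Hya Hyu]] := c_B Hst n0 Hu Hra0.
  have H1 : (a <= f u)%O by rewrite -(fid a HaQ); exact: fm (ltW Hau).
  have H2 : (b <= f u)%O by rewrite -(Hy0 y Hy Hya); exact: fm (ltW Hyu).
  rewrite -Hla; exact: (Habove _ a b (fQ' u) HaQ HbQ Hab0 Hlab H1 H2).
have [u0 [Hu0 Hu0b]] := c_H Hst n0 Hrb.
have k1 : (1 < k)%N by have := Hu1 u0 Hu0 Hu0b; have := lvlk _ (fQ' u0); lia.
have [c [HcQ Hlc]] := Hexist 1%N k1.
have [e [HeQ Hec Hle]] := Hother 1%N c k1 HcQ Hlc.
have Hbq : forall q, q \in Q -> lvl q = 1%N -> (b < q)%O /\ (2 <= rank q)%N.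
  move=> q Hq Hl; have Hbq : (b < q)%O by apply: Hlt => //; rewrite Hlb Hl.
  by split => //; have := rank_lt Hbq; rewrite Hrb.
have Hfu : forall u q, rank u = 1%N -> u != b -> q \in Q -> lvl q = 1%N -> (u < q)%O -> f u = q.
  move=> u q Hu Hub Hq Hl Huq; apply: Hbelow => //.
    by rewrite -(fid q Hq); exact: fm (ltW Huq).
  by rewrite Hl; exact: Hu1.
have Hr2 : forall c e, c \in Q -> e \in Q -> lvl c = 1%N -> lvl e = 1%N -> c != e -> rank c = 2%N.
  move=> c' e' Hc Hee Hlc' Hle' Hce.
  have [_ Hc2] := Hbq c' Hc Hlc'; have [_ He2] := Hbq e' Hee Hle'.
  case: (ltnP (rank c') 3) => Hc3.
    by apply/eqP; rewrite eqn_leq Hc2 andbT -ltnS.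
  exfalso.
  have Hfc : f u0 = c' := Hfu u0 c' Hu0 Hu0b Hc Hlc' (below_all Hst (erefl _) Hc3 Hu0).
  case: (ltnP (rank e') 3) => He3.
    have He2' : rank e' = 2%N by apply/eqP; rewrite eqn_leq He2 andbT -ltnS.
    have n1 : (1 < n)%N by apply: leq_trans He2 (rle e').
    have [u [Hu Hub Hue]] := c_B Hst n1 He2' Hrb.
    have := Hfu u e' Hu Hub Hee Hle' Hue.
    rewrite (Hfu u c' Hu Hub Hc Hlc' (below_all Hst (erefl _) Hc3 Hu)) => E.
    by move: Hce; rewrite E eqxx.
  have := Hfu u0 e' Hu0 Hu0b Hee Hle' (below_all Hst (erefl _) He3 Hu0).
  by rewrite Hfc => E; move: Hce; rewrite E eqxx.
have Hce : c != e by rewrite eq_sym.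
have Hrc := Hr2 c e HcQ HeQ Hlc Hle Hce.
have Hre := Hr2 e c HeQ HcQ Hle Hlc Hec.
have n1 : (1 < n)%N by have := rle c; rewrite Hrc.
have [uc [Huc Hucb Hucc]] := c_B Hst n1 Hrc Hrb.
have [ue [Hue Hueb Huee]] := c_B Hst n1 Hre Hrb.
have Hfc := Hfu uc c Huc Hucb HcQ Hlc Hucc.
have Hfe := Hfu ue e Hue Hueb HeQ Hle Huee.
have Hne : uc != ue by apply: contraNneq Hec => E; rewrite -Hfe -E Hfc.
have [w [Hw Hucw Huew]] := c_F Hst n1 Huc Hue Hne.
have Hlv2 : forall x, (c <= f x)%O -> (e <= f x)%O -> (2 <= lvl (f x))%N.
  move=> x H1 H2.
  have := Habove _ c e (fQ' x) HcQ HeQ Hce (etrans Hlc (esym Hle)) H1 H2.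
  by rewrite Hlc.
have Hfw : (2 <= lvl (f w))%N.
  apply: Hlv2; [rewrite -Hfc | rewrite -Hfe]; apply: fm; exact: ltW.
have Hx3 : forall x, (3 <= rank x)%N -> (2 <= lvl (f x))%N.
  move=> x Hx; apply: Hlv2; [rewrite -Hfc | rewrite -Hfe]; apply: fm; apply: ltW.
    exact: (below_all Hst (erefl _) Hx Huc).
  exact: (below_all Hst (erefl _) Hx Hue).
have HR : forall q, q \in Q -> (2 <= lvl q)%N -> (3 <= rank q)%N.
  move=> q Hq Hl; have Hcq : (c < q)%O by apply: Hlt => //; rewrite Hlc.
  by have := rank_lt Hcq; rewrite Hrc.
have n3 : (3 <= n)%N by apply: leq_trans (HR _ (fQ' w) Hfw) (rle _).
split => //.
exists [set q in Q | (2 <= lvl q)%N]; split.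
- split.
    by apply/subsetP => q; rewrite !inE => /andP[Hq Hl]; rewrite HR // rle.
  exists f; split; [|split].
  + by move=> x; rewrite !inE => /andP[Hx _]; rewrite fQ' Hx3.
  + by move=> x y _ _; exact: fm.
  + by move=> q; rewrite inE => /andP[Hq _]; exact: fid.
- exists (k - 2)%N, (fun q => lvl q - 2)%N; split; [|split; [|split]].
  + by have := lvlk _ (fQ' w); clear -Hfw; lia.
  + by move=> q; rewrite inE => /andP[Hq Hl]; have := lvlk _ Hq; clear -Hl; lia.
  + move=> i Hi; have Hk : (i + 2 < k)%N by clear -Hi; lia.
    apply: (etrans _ (lvlcard _ Hk)).
    apply: eq_card => q; rewrite !inE; case: (q \in Q) => //=.
    move: (lvl q) => l; clear.
    apply/idP/idP => [/andP[H1 /eqP H2]|/eqP H]; first by apply/eqP; lia.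
    by apply/andP; split; [|apply/eqP]; lia.
  + move=> x y; rewrite !inE => /andP[Hx Hlx] /andP[Hy Hly] Hxy.
    rewrite (lvlle x y Hx Hy Hxy); move: (lvl x) (lvl y) Hlx Hly => lx ly; clear.
    by move=> Hlx Hly; apply/idP/idP => H; lia.
Qed.
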